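(* Let $f:\mathbb{R}^n\to\mathbb{R}$ be continuously differentiable, let $s$ be an integer with $0<s<n$, and let $L>0$. Then $\mathbf{x}^*\in\mathbb{R}^n$ satisfies $\mathbf{x}^*\in C_s$ and $\mathbf{x}^*\in P_{C_s}\!\left(\mathbf{x}^*-\frac{1}{L}\nabla f(\mathbf{x}^* )\right)$ if and only if $\|\mathbf{x}^*\|_0\le s$ and $$|\nabla_i f(\mathbf{x}^* )|\ \begin{cases}\le L\,M_s(\mathbf{x}^* ) & \text{if } i\in I_0(\mathbf{x}^* ),\\ =0 & \text{if } i\in I_1(\mathbf{x}^* ).\end{cases}$$
   Context: $\|\mathbf{x}\|_0$ is the number of nonzero components of $\mathbf{x}$ and $C_s=\{\mathbf{x}:\|\mathbf{x}\|_0\le s\}$. $I_1(\mathbf{x})=\{i:x_i\neq0\}$ and $I_0(\mathbf{x})=\{i:x_i=0\}$. $M_i(\mathbf{x})$ denotes the $i$-th largest absolute value among the components of $\mathbf{x}$ (so $M_1(\mathbf{x})\ge\dots\ge M_n(\mathbf{x})$). For a closed set $D$, $P_D(\mathbf{y})=\operatorname{argmin}_{\mathbf{x}\in D}\|\mathbf{x}-\mathbf{y}\|^2$ is the (possibly multi-valued) set of orthogonal projections of $\mathbf{y}$ onto $D$; in particular $P_{C_s}(\mathbf{y})$ is the set of vectors obtained by keeping $s$ components of $\mathbf{y}$ of largest absolute value and setting the rest to zero. *)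

(* Defs.v *)
From HB Require Import structures.
From mathcomp Require Import all_boot all_order all_algebra.
From mathcomp Require Import all_classical all_reals all_analysis.
Set Implicit Arguments. Unset Strict Implicit. Unset Printing Implicit Defensive.
Import Order.TTheory GRing.Theory Num.Theory.
Import numFieldNormedType.Exports.
Local Open Scope ring_scope.
Local Open Scope classical_set_scope.

(* Vectors of R^n are row vectors 'rV[R]_n; component i is x 0 i. *)

Definition l0norm {R : realType} {n : nat} (x : 'rV[R]_n) : nat :=
  #|[set i : 'I_n | x 0 i != 0]|.

Definition Cs {R : realType} (n s : nat) : set 'rV[R]_n :=
  [set x | (l0norm x <= s)%N].

Arguments Cs {R} n s _.

Definition sqdist {R : realType} {n : nat} (x y : 'rV[R]_n) : R :=
  \sum_(i < n) (x 0 i - y 0 i) ^+ 2.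

Definition proj_set {R : realType} {n : nat} (D : set 'rV[R]_n) (y : 'rV[R]_n)
  : set 'rV[R]_n :=
  [set x | D x /\ forall z, D z -> sqdist x y <= sqdist z y].

(* M_k(x) : the k-th largest absolute value among components (k is 1-based) *)
Definition Mk {R : realType} {n : nat} (k : nat) (x : 'rV[R]_n) : R :=
  nth 0 (sort (fun a b : R => b <= a) [seq `|x 0 i| | i <- enum 'I_n]) k.-1.

Definition partial {R : realType} {n : nat} (f : 'rV[R]_n -> R) (i : 'I_n)
  (x : 'rV[R]_n) : R :=
  'D_(delta_mx 0 i) f x.

Definition grad {R : realType} {n : nat} (f : 'rV[R]_n -> R) (x : 'rV[R]_n)
  : 'rV[R]_n := \row_i partial f i x.

Definition C1 {R : realType} {n : nat} (f : 'rV[R]_n -> R) : Prop :=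
  (forall x, differentiable f x) /\ (forall i, continuous (partial f i)).

(* Main.v *)
Require Import Defs.
From HB Require Import structures.
From mathcomp Require Import all_boot all_order all_algebra.
From mathcomp Require Import all_classical all_reals all_analysis.
From mathcomp Require Import zify ring lra.
Import Order.TTheory GRing.Theory Num.Theory.
Import numFieldNormedType.Exports.
Local Open Scope ring_scope.
Local Open Scope classical_set_scope.
Set Implicit Arguments. Unset Strict Implicit.

Lemma cnt (T : finType) (P : pred T) : count P (enum T) = #|[set i | P i]%SET|.
Proof. rewrite cardE /enum_mem size_filter. rewrite /= /enum_mem filter_predT. apply: eq_count => i. by rewrite /= inE. Qed.

Lemma Mk_props (R : realType) n s (x : 'rV[R]_n) : (0 < s)%N -> (s <= n)%N ->
  [/\ exists j, Mk s x = `|x 0 j|,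
     (s <= #|[set i | (Mk s x <= `|x 0 i|)%R]%SET|)%N &
     (#|[set i | (Mk s x < `|x 0 i|)%R]%SET| <= s.-1)%N].
Proof.
move=> s0 sn.
set l0 := [seq `|x 0 i| | i <- enum 'I_n].
set l := sort (fun a b : R => b <= a) l0.
have szl : size l = n by rewrite size_sort size_map size_enum_ord.
have tr : transitive (fun a b : R => b <= a).
  by move=> b a c ab bc; exact: le_trans bc ab.
have srt : sorted (fun a b : R => b <= a) l.
  by apply: sort_sorted => a b; rewrite orbC le_total.
have cntl : forall P : pred R, count P l = #|[set i | P `|x 0 i|]%SET|.
  move=> P; rewrite (permP (permEl (perm_sort _ _))) count_map -cnt.
  by apply: eq_count.
have ks : (s.-1 < size l)%N by rewrite szl; case: s s0 sn.
have MkE : Mk s x = nth 0 l s.-1 by [].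
split.
- have : nth 0 l s.-1 \in l0 by rewrite -(mem_sort (fun a b : R => b <= a)); apply: mem_nth.
  rewrite MkE => /mapP [j _ ->]. by exists j.
- rewrite -(cntl (fun b => Mk s x <= b)) -(cat_take_drop s l) count_cat.
  apply: leq_trans (leq_addr _ _).
  have -> : count (fun b => Mk s x <= b) (take s l) = size (take s l).
    apply/eqP; rewrite -all_count; apply/(all_nthP 0) => i hi.
    rewrite size_take in hi.
    have his : (i < s)%N.
      move: hi; rewrite szl; case: ifP => // /negbT; rewrite -leqNgt => h hi'.
      exact: leq_trans hi' h.
    rewrite /= nth_take // MkE.
    apply: (sorted_leq_nth tr) => //; rewrite ?inE //.
    + by apply: leq_trans his _; rewrite szl.
    + by move: his; case: (s) s0.
  by rewrite size_take szl; case: ifP.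
- rewrite -(cntl (fun b => Mk s x < b)) -(cat_take_drop s.-1 l) count_cat.
  have -> : count (fun b => Mk s x < b) (drop s.-1 l) = 0%N.
    apply/eqP; rewrite -leqn0 leqNgt -has_count; apply/negP => /(has_nthP 0) [i hi].
    rewrite nth_drop MkE ltNge; apply/negP/negPn.
    rewrite size_drop in hi.
    apply: (sorted_leq_nth tr) => //; rewrite ?inE //; first by rewrite -ltn_subRL.
    exact: leq_addr.
  rewrite addn0; apply: leq_trans (count_size _ (take s.-1 l)) _.
  by rewrite size_take; case: ifP => // /negbT; rewrite -leqNgt.
Qed.

Lemma l0E (R : realType) n (x : 'rV[R]_n) : l0norm x = #|[set i | x 0 i != 0]%SET|.
Proof. apply: eq_card => i. rewrite inE /=. by rewrite /in_mem /= /in_set asboolb. Qed.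

Lemma sq_norm (R : realType) (a : R) : a ^+ 2 = `|a| ^+ 2.
Proof. by rewrite real_normK // num_real. Qed.

Lemma Mk_ge0 (R : realType) n s (x : 'rV[R]_n) : (0 < s)%N -> (s <= n)%N -> 0 <= Mk s x.
Proof. by move=> s0 sn; case: (Mk_props x s0 sn) => -[j ->]. Qed.

Lemma Mk_lt (R : realType) n s (x : 'rV[R]_n) : (0 < s)%N -> (s <= n)%N ->
  (l0norm x < s)%N -> Mk s x = 0.
Proof.
move=> s0 sn hl; case: (Mk_props x s0 sn) => _ hA _.
have M0 := Mk_ge0 x s0 sn.
apply/eqP; rewrite eq_le M0 andbT; rewrite leNgt; apply/negP => Mp.
have : (#|[set i | (Mk s x <= `|x 0 i|)%R]%SET| <= l0norm x)%N.
  rewrite l0E; apply: subset_leq_card; apply/fintype.subsetP => i; rewrite !inE => h.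
  by rewrite -normr_gt0; apply: lt_le_trans h.
move=> h; have := leq_trans hA h; by rewrite leqNgt hl.
Qed.

Lemma Mk_eq_le (R : realType) n s (x : 'rV[R]_n) : (0 < s)%N -> (s <= n)%N ->
  l0norm x = s -> forall j, x 0 j != 0 -> Mk s x <= `|x 0 j|.
Proof.
move=> s0 sn hl j xj; case: (Mk_props x s0 sn) => _ hA _.
have M0 := Mk_ge0 x s0 sn.
rewrite leNgt; apply/negP => hj.
have Mp : 0 < Mk s x by apply: le_lt_trans hj.
have : (#|[set i | (Mk s x <= `|x 0 i|)%R]%SET| < l0norm x)%N.
  rewrite l0E (cardsD1 j [set i | x 0 i != 0]%SET) inE xj add1n ltnS.
  apply: subset_leq_card; apply/fintype.subsetP => i; rewrite !inE => h.
  apply/andP; split.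
    by apply/negP => /eqP ij; subst i; move: h; rewrite leNgt hj.
  by rewrite -normr_gt0; apply: lt_le_trans h.
by rewrite hl ltnNge hA.
Qed.

Lemma Mk_eq_ex (R : realType) n s (x : 'rV[R]_n) : (0 < s)%N -> (s <= n)%N ->
  l0norm x = s -> exists j, x 0 j != 0 /\ `|x 0 j| <= Mk s x.
Proof.
move=> s0 sn hl; case: (Mk_props x s0 sn) => -[j hj] _ hB.
case: (boolP (x 0 j != 0)) => xj; first by exists j; rewrite hj.
move: xj; rewrite negbK => /eqP xj; rewrite xj normr0 in hj.
exfalso; move: hB; rewrite hj.
have -> : #|[set i | (0 < `|x 0 i|)%R]%SET| = l0norm x.
  by rewrite l0E; apply: eq_card => i; rewrite !inE normr_gt0.
by rewrite hl; case: (s) s0 => // k _; rewrite ltnn.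
Qed.

Definition upd (R : realType) n (x : 'rV[R]_n) (i : 'I_n) (v : R) : 'rV[R]_n :=
  \row_k (if k == i then v else x 0 k).

Lemma updE (R : realType) n (x : 'rV[R]_n) i v k :
  upd x i v 0 k = if k == i then v else x 0 k.
Proof. by rewrite /upd mxE. Qed.

Lemma sqdist_upd (R : realType) n (x y : 'rV[R]_n) i v :
  sqdist (upd x i v) y = sqdist x y + ((v - y 0 i) ^+ 2 - (x 0 i - y 0 i) ^+ 2).
Proof.
rewrite /sqdist (bigD1 i) //= [in RHS](bigD1 i) //= updE eqxx.
rewrite (eq_bigr (fun k => (x 0 k - y 0 k) ^+ 2)); last first.
  by move=> k /negbTE kn; rewrite updE kn.
by rewrite [RHS]addrC addrA subrK.
Qed.

Lemma l0_upd (R : realType) n (x : 'rV[R]_n) i v :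
  (l0norm (upd x i v) + (x 0 i != 0)%R = l0norm x + (v != 0)%R)%N.
Proof.
rewrite !l0E (cardsD1 i [set k | upd x i v 0 k != 0]%SET) (cardsD1 i [set k | x 0 k != 0]%SET).
rewrite !inE updE eqxx.
have -> : ([set k | upd x i v 0 k != 0]%SET :\ i = [set k | x 0 k != 0]%SET :\ i)%SET.
  by apply/setP => k; rewrite !inE updE; case: (k == i).
lia.
Qed.

Lemma mainlem (R : realType) n s (x g : 'rV[R]_n) (L : R) :
  (0 < s)%N -> (s < n)%N -> 0 < L ->
  (Cs n s x /\ proj_set (Cs n s) (x - L^-1 *: g) x) <->
  ((l0norm x <= s)%N /\ forall i : 'I_n,
     (x 0 i = 0 -> `|g 0 i| <= L * Mk s x) /\ (x 0 i != 0 -> `|g 0 i| = 0)).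
Proof.
move=> s0 sn L0.
have sn' : (s <= n)%N := ltnW sn.
set y := x - L^-1 *: g.
have yE : forall i, y 0 i = x 0 i - L^-1 * g 0 i by move=> i; rewrite !mxE.
have M0 := Mk_ge0 x s0 sn'.
have Li : 0 < L^-1 by rewrite invr_gt0.
have gy : forall i, x 0 i = 0 -> (`|g 0 i| <= L * Mk s x) = (`|y 0 i| <= Mk s x).
  move=> i xi; rewrite yE xi sub0r normrN normrM (gtr0_norm Li).
  by rewrite ler_pdivrMl.
have gz : forall i, (`|g 0 i| = 0) <-> (x 0 i = y 0 i).
  move=> i; rewrite yE; split => [/normr0_eq0 -> | h]; first by rewrite mulr0 subr0.
  have : L^-1 * g 0 i = 0 by lra.
  by move/eqP; rewrite mulf_eq0 invr_eq0 (gt_eqF L0) /= => /eqP ->; rewrite normr0.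
have b1 : forall b : bool, (b <= 1)%N by case.
split.
- case=> Cx [_ Hp].
  have hx : (l0norm x <= s)%N := Cx.
  have I1 : forall i, x 0 i != 0 -> x 0 i = y 0 i.
    move=> i xi.
    have Cz : Cs n s (upd x i (y 0 i)).
      change (l0norm (upd x i (y 0%R i)) <= s)%N.
      have := l0_upd x i (y 0 i); rewrite xi /=; have := b1 (y 0 i != 0).
      lia.
    have := Hp _ Cz; rewrite sqdist_upd subrr => h.
    have : (x 0 i - y 0 i) ^+ 2 <= 0 by move: h; rewrite expr2 mulr0; lra.
    rewrite le_eqVlt ltNge sqr_ge0 orbF sqrf_eq0 subr_eq0 => /eqP //.
  split => // i; split => xi; last by apply/gz/I1.
  rewrite gy //; rewrite leNgt; apply/negP => hy.
  case: (ltngtP (l0norm x) s) => hl.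
  + have Cz : Cs n s (upd x i (y 0 i)).
      change (l0norm (upd x i (y 0%R i)) <= s)%N.
      have := l0_upd x i (y 0 i); rewrite xi eqxx /=; have := b1 (y 0 i != 0).
      lia.
    have := Hp _ Cz; rewrite sqdist_upd subrr xi sub0r sqrrN expr2 mulr0 => h.
    move: h; rewrite lerDl sub0r oppr_ge0 le_eqVlt ltNge sqr_ge0 orbF sqrf_eq0 => /eqP y0.
    by move: hy; rewrite y0 normr0 ltNge M0.
  + by move: hx; rewrite leqNgt hl.
  + have [j [xj hj]] := Mk_eq_ex s0 sn' hl.
    have ij : i != j by apply/negP => /eqP ij; subst j; rewrite xi eqxx in xj.
    set z1 := upd x j 0.
    have z1i : z1 0 i = 0 by rewrite updE (negbTE ij).
    have Cz : Cs n s (upd z1 i (y 0 i)).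
      change (l0norm (upd z1 i (y 0%R i)) <= s)%N.
      have := l0_upd x j 0; rewrite xj eqxx /= -/z1.
      have := l0_upd z1 i (y 0 i); rewrite z1i eqxx /=; have := b1 (y 0 i != 0).
      lia.
    have := Hp _ Cz; rewrite !sqdist_upd subrr z1i sub0r sqrrN -(I1 j xj) subrr sub0r sqrrN => h.
    have e1 := sq_norm (y 0 i); have e2 := sq_norm (x 0 j).
    have b : `|x 0 j| * `|x 0 j| <= Mk s x * Mk s x by apply: ler_pM.
    have c : Mk s x * Mk s x < `|y 0 i| * `|y 0 i| by apply: ltr_pM.
    rewrite !expr2 ?mulr0 in e1 e2 h; lra.
- case=> hx H; split; first exact: hx; split; first exact: hx.
  move=> z Cz; have hz : (l0norm z <= s)%N := Cz.
  have I1 : forall i, x 0 i != 0 -> x 0 i = y 0 i by move=> i xi; apply/gz; case: (H i) => _; apply.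
  have I0 : forall i, x 0 i = 0 -> `|y 0 i| <= Mk s x.
    by move=> i xi; rewrite -gy //; case: (H i) => + _; apply.
  case: (ltngtP (l0norm x) s) => hl.
  + have Me := Mk_lt s0 sn' hl.
    have -> : sqdist x y = 0.
      rewrite /sqdist big1 // => i _.
      case: (eqVneq (x 0 i) 0) => xi.
        have := I0 i xi; rewrite Me normr_le0 => /eqP ->; by rewrite xi subr0 expr2 mulr0.
      by rewrite I1 // subrr expr2 mulr0.
    by rewrite /sqdist; apply: sumr_ge0 => i _; exact: sqr_ge0.
  + by move: hx; rewrite leqNgt hl.
  + set T := [set i | x 0 i != 0]%SET; set S := [set i | z 0 i != 0]%SET.
    set w := fun i => y 0 i ^+ 2.
    have eX : sqdist x y = \sum_(i in ~: T) w i.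
      rewrite /sqdist [RHS]big_mkcond /=; apply: eq_bigr => i _; rewrite !inE negbK.
      case: (eqVneq (x 0 i) 0) => xi; first by rewrite xi sub0r sqrrN.
      by rewrite I1 // subrr expr2 mulr0.
    have eZ : \sum_(i in ~: S) w i <= sqdist z y.
      rewrite /sqdist big_mkcond /=; apply: ler_sum => i _; rewrite !inE negbK.
      case: (eqVneq (z 0 i) 0) => zi; first by rewrite zi sub0r sqrrN.
      exact: sqr_ge0.
    rewrite eX; apply: le_trans eZ.
    rewrite [in X in X <= _](big_setID S) [in X in _ <= X](big_setID T) /=.
    have -> : (~: T :\: S = ~: S :\: T)%SET by apply/setP => i; rewrite !inE andbC.
    apply: lerD => //.
    apply: (@le_trans _ _ (Mk s x ^+ 2 *+ #|(~: T :&: S)%SET|)).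
      rewrite -sumr_const; apply: ler_sum => i; rewrite !inE negbK => /andP [/eqP xi _].
      have h := I0 i xi; rewrite /w sq_norm !expr2.
      exact: (ler_pM (normr_ge0 _) (normr_ge0 _) h h).
    apply: (@le_trans _ _ (Mk s x ^+ 2 *+ #|(~: S :&: T)%SET|)); last first.
      rewrite -sumr_const; apply: ler_sum => i; rewrite !inE negbK => /andP [_ xi].
      have h := Mk_eq_le s0 sn' hl xi; rewrite /w -I1 // (sq_norm (x 0 i)) !expr2.
      exact: (ler_pM M0 M0 h h).
    have ab : (#|(~: T :&: S)%SET| <= #|(~: S :&: T)%SET|)%N.
      have h1 := cardsID S T; have h2 := cardsID T S.
      rewrite finset.setIC -finset.setDE [(~: S :&: T)%SET]finset.setIC -finset.setDE.
      rewrite finset.setIC in h2.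
      move: hz hl; rewrite !l0E -/T -/S; lia.
    rewrite -(mulr_natr _ #|(~: T :&: S)%SET|) -(mulr_natr _ #|(~: S :&: T)%SET|).
    by apply: ler_wpM2l; [exact: sqr_ge0 | rewrite ler_nat].
Qed.

Theorem lemma2p2 (R : realType) (n s : nat) (f : 'rV[R]_n -> R) (L : R)
  (xs : 'rV[R]_n) :
  C1 f -> (0 < s)%N -> (s < n)%N -> 0 < L ->
  (Cs n s xs /\ proj_set (Cs n s) (xs - L^-1 *: grad f xs) xs) <->
  ((l0norm xs <= s)%N /\
   forall i : 'I_n,
     (xs 0 i = 0 -> `|grad f xs 0 i| <= L * Mk s xs) /\
     (xs 0 i != 0 -> `|grad f xs 0 i| = 0)).
Proof. by move=> _; apply: mainlem. Qed.
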